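(* Fix $x\in\{0,1\}^n$ with exactly $K$ ones and fix the incidence matrix $T$. Consider a right node $k$ of the SAFFRON construction, with measurement vector $z_k$. (i) The singleton test at node $k$ declares an item if and only if node $k$ is a singleton, and in that case the declared item is the unique defective item connected to node $k$. (ii) If node $k$ is a doubleton whose two defective items are $\ell_0$ and $\ell^*$, then the doubleton test at node $k$ with respect to $\ell_0$ declares exactly the item $\ell^*$. (iii) If node $k$ is connected to $\ell_0$ and to at least two other defective items, then the probability, over the random draw of $s_1,s_2$, that the doubleton test at node $k$ with respect to $\ell_0$ declares an item that is not one of the defective items connected to node $k$ is at most $1/n^2$.
   Context: Items are indexed by $[n]=\{1,\dots,n\}$ with $n=2^L$. The unknown support vector is $x\in\{0,1\}^n$ with $x_\ell=1$ iff item $\ell$ is defective; exactly $K$ items are defective. For $\ell\in[n]$, $b_\ell\in\{0,1\}^L$ denotes the $L$-bit binary representation of $\ell-1$, and $\overline{v}$ denotes the bitwise complement of a binary vector $v$. Two sequences $s_1=(i_1,\dots,i_n)$ and $s_2=(j_1,\dots,j_n)$ are drawn independently and uniformly at random from $[n]^n$. The signature of item $\ell$ is the vector $u_\ell=(b_\ell;\overline{b_\ell};b_{i_\ell};\overline{b_{i_\ell}};b_{j_\ell};\overline{b_{j_\ell}})\in\{0,1\}^{6L}$ (vertical concatenation). A bipartite graph has $n$ left nodes (the items) and $M$ right nodes, with incidence matrix $T\in\{0,1\}^{M\times n}$ ($T_{k\ell}=1$ iff item $\ell$ is connected to right node $k$). For each right node $k$ there are $6L$ tests: the $r$-th of them pools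 exactly the items $\ell$ with $T_{k\ell}=1$ and $(u_\ell)_r=1$, and its outcome is positive iff the pool contains a defective item. Hence the measurement vector of right node $k$ is $z_k=\bigvee_{\ell:\,T_{k\ell}x_\ell=1}u_\ell\in\{0,1\}^{6L}$ (bitwise OR; the zero vector if there is no such $\ell$). Write $z_k=(z_k^1;\dots;z_k^6)$ with each section $z_k^w\in\{0,1\}^L$, and $z^w_{k,t}$ for its $t$-th bit. A right node is a singleton if it is connected to exactly one defective item and a doubleton if it is connected to exactly two defective items. Singleton test at node $k$: if the Hamming weight of $z_k$ equals $3L$, declare defective the item $\ell$ with $b_\ell=z_k^1$; otherwise declare nothing. Doubleton test at node $k$ with respect to an item $\ell_0$ (already known to be defective, with $T_{k\ell_0}=1$): set $r^1=b_{\ell_0}$, $r^2=b_{i_{\ell_0}}$, $r^3=b_{j_{\ell_0}}$; for $w=1,2,3$ and $t=1,\dots,L$ let $c^w_t=z^{2w-1}_{k,t}$ if $r^w_t=0$ and $c^w_t=1-z^{2w}_{k,t}$ if $r^w_t=1$; let $\ell_w\in[n]$ be the index with $b_{\ell_w}=c^w$. If $i_{\ell_1}=\ell_2$ and $j_{\ell_1}=\ell_3$, declare item $\ell_1$ defective; otherwise declare nothing. *)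

(* Defs.v *)
From HB Require Import structures.
From mathcomp Require Import all_boot all_order all_algebra.
Set Implicit Arguments. Unset Strict Implicit. Unset Printing Implicit Defensive.

(* Items [n] = {1..n} with n = 2^L are represented by 'I_(2^L); the ordinal
   with value m stands for item m+1, so b_l is the L-bit binary expansion of
   the ordinal's value. *)
Notation item L := 'I_(2 ^ L).

Definition bits (L : nat) (l : item L) (t : 'I_L) : bool := odd (l %/ 2 ^ t).

(* the index l with b_l = v (unique, exists since n = 2^L) *)
Definition of_bits (L : nat) (v : 'I_L -> bool) : option (item L) :=
  [pick l : item L | [forall t, bits l t == v t]].

(* signature u_l = (b_l; ~b_l; b_{i_l}; ~b_{i_l}; b_{j_l}; ~b_{j_l}),
   written section-wise: u L s1 s2 l w t = bit t of section w (w = 0..5). *)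
Definition sig_u (L : nat) (s1 s2 : {ffun item L -> item L})
    (l : item L) (w : 'I_6) (t : 'I_L) : bool :=
  match val w with
  | 0 => bits l t
  | 1 => ~~ bits l t
  | 2 => bits (s1 l) t
  | 3 => ~~ bits (s1 l) t
  | 4 => bits (s2 l) t
  | _ => ~~ bits (s2 l) t
  end.

(* measurement vector of right node k (section w, bit t): the outcome of
   the test pooling {l | T k l && u_l(w,t)}, positive iff a defective is in it *)
Definition meas (L M : nat) (x : item L -> bool) (T : 'I_M -> item L -> bool)
    (s1 s2 : {ffun item L -> item L}) (k : 'I_M) (w : 'I_6) (t : 'I_L) : bool :=
  [exists l, [&& T k l, x l & sig_u s1 s2 l w t]].

Definition meas_weight L M x T s1 s2 (k : 'I_M) : nat :=
  \sum_(w < 6) \sum_(t < L) (@meas L M x T s1 s2 k w t : nat).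

Definition conn_def (L M : nat) (x : item L -> bool) (T : 'I_M -> item L -> bool)
    (k : 'I_M) : {set item L} := [set l | T k l && x l].

Definition singleton_test L M x T s1 s2 (k : 'I_M) : option (item L) :=
  if meas_weight x T s1 s2 k == 3 * L then of_bits (@meas L M x T s1 s2 k (Ordinal (isT : 0 < 6)))
  else None.

(* c^w_t for w = 1,2,3 (here w' = 0,1,2), with r^w = bits of r *)
Definition dbl_c L M x T s1 s2 (k : 'I_M) (r : item L) (w' : nat) (t : 'I_L) : bool :=
  let zodd := @meas L M x T s1 s2 k (inord (2 * w')) t in
  let zeven := @meas L M x T s1 s2 k (inord (2 * w').+1) t in
  if bits r t then ~~ zeven else zodd.

Definition doubleton_test L M x T (s1 s2 : {ffun item L -> item L}) (k : 'I_M)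
    (l0 : item L) : option (item L) :=
  match of_bits (@dbl_c L M x T s1 s2 k l0 0),
        of_bits (@dbl_c L M x T s1 s2 k (s1 l0) 1),
        of_bits (@dbl_c L M x T s1 s2 k (s2 l0) 2) with
  | Some l1, Some l2, Some l3 =>
      if (s1 l1 == l2) && (s2 l1 == l3) then Some l1 else None
  | _, _, _ => None
  end.

Definition dbl_false_decl L M x T (k : 'I_M) (l0 : item L)
    (s : {ffun item L -> item L} * {ffun item L -> item L}) : bool :=
  match @doubleton_test L M x T s.1 s.2 k l0 with
  | Some l => l \notin conn_def x T k
  | None => false
  end.

(* Main.v *)
Require Import Defs.
From HB Require Import structures.
From mathcomp Require Import all_boot all_order all_algebra.
Import Order.TTheory GRing.Theory Num.Theory.
Set Implicit Arguments. Unset Strict Implicit.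

Definition hw L (s1 s2 : {ffun item L -> item L}) (w' : nat) (l : item L) : item L :=
  if w' is 0 then l else if w' is 1 then s1 l else s2 l.

Lemma meas_even L M x T s1 s2 (k : 'I_M) w' t : w' < 3 ->
  @meas L M x T s1 s2 k (inord (2 * w')) t =
  [exists l, [&& T k l, x l & bits (hw s1 s2 w' l) t]].
Proof.
move=> hw'; rewrite /meas /sig_u /= inordK; last by case: w' hw' => [|[|[|]]].
by case: w' hw' => [|[|[|]]].
Qed.

Lemma meas_odd L M x T s1 s2 (k : 'I_M) w' t : w' < 3 ->
  @meas L M x T s1 s2 k (inord (2 * w').+1) t =
  [exists l, [&& T k l, x l & ~~ bits (hw s1 s2 w' l) t]].
Proof.
move=> hw'; rewrite /meas /sig_u /= inordK; last by case: w' hw' => [|[|[|]]].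
by case: w' hw' => [|[|[|]]].
Qed.

Lemma sum6 (F : 'I_6 -> nat) :
  \sum_(w < 6) F w = \sum_(p < 3) (F (inord (2 * p)) + F (inord (2 * p).+1)).
Proof.
rewrite !big_ord_recl !big_ord0 /= !addnA !addn0.
by do !congr (_ + _); congr F; apply: val_inj; rewrite /= ?inordK.
Qed.
Lemma bits_nat_uniq L : forall m m', m < 2 ^ L -> m' < 2 ^ L ->
  (forall t, t < L -> odd (m %/ 2 ^ t) = odd (m' %/ 2 ^ t)) -> m = m'.
Proof.
elim: L => [|L IH] m m'.
  by rewrite expn0 !ltnS !leqn0 => /eqP-> /eqP->.
move=> hm hm' H.
rewrite -[m]odd_double_half -[m']odd_double_half.
have := H 0 isT; rewrite expn0 !divn1 => ->.
congr (_ + _); congr (_.*2).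
have h2 a : a < 2 ^ L.+1 -> a %/ 2 < 2 ^ L by rewrite ltn_divLR // expnS mulnC.
apply: IH; rewrite -?divn2; [exact: h2|exact: h2|]; rewrite ?divn2.
move=> t ht; rewrite -!divn2 -!divnMA -expnS; exact: H.
Qed.

Lemma bits_inj L (l l' : item L) : (forall t, bits l t = bits l' t) -> l = l'.
Proof.
move=> H; apply: val_inj; apply: (@bits_nat_uniq L) => [||t ht]; rewrite ?ltn_ord //.
exact: (H (Ordinal ht)).
Qed.

Lemma of_bits_bits L (l : item L) : of_bits (bits l) = Some l.
Proof.
rewrite /of_bits; case: pickP => [l' /forallP H|/(_ l)].
  by congr Some; apply: bits_inj => t; apply/eqP.
by move/negbT/negP; case; apply/forallP.
Qed.

Lemma of_bits_ext L (v v' : 'I_L -> bool) : v =1 v' -> of_bits v = of_bits v'.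
Proof. by move=> H; rewrite /of_bits; apply: eq_pick => l; apply: eq_forallb => t; rewrite H. Qed.

Lemma of_bitsP L (v : 'I_L -> bool) l : of_bits v = Some l -> forall t, bits l t = v t.
Proof. rewrite /of_bits; case: pickP => // l' /forallP H [<-] t; exact/eqP. Qed.

Lemma weightE L M x T s1 s2 (k : 'I_M) :
  @meas_weight L M x T s1 s2 k =
  \sum_(t < L) \sum_(p < 3)
     ([exists l, [&& T k l, x l & bits (hw s1 s2 p l) t]] +
      [exists l, [&& T k l, x l & ~~ bits (hw s1 s2 p l) t]]).
Proof.
rewrite /meas_weight exchange_big; apply: eq_bigr => t _.
rewrite sum6; apply: eq_bigr => p _.
by rewrite meas_even // meas_odd.
Qed.

Lemma in_conn L M x T (k : 'I_M) (l : item L) : (l \in conn_def x T k) = T k l && x l.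
Proof. by rewrite inE. Qed.

Lemma ex1 L M x T (k : 'I_M) (l0 : item L) (P : item L -> bool) :
  conn_def x T k = [set l0] -> [exists l, [&& T k l, x l & P l]] = P l0.
Proof.
move=> E.
have H l : T k l && x l = (l == l0) by rewrite -in_conn E inE.
apply/existsP/idP.
  by case=> l; rewrite andbA H => /andP [/eqP -> ].
by move=> hP; exists l0; rewrite andbA H eqxx.
Qed.

Lemma ex2 L M x T (k : 'I_M) (l0 ls : item L) (P : item L -> bool) :
  conn_def x T k = [set l0; ls] -> [exists l, [&& T k l, x l & P l]] = P l0 || P ls.
Proof.
move=> E.
have H l : T k l && x l = (l == l0) || (l == ls) by rewrite -in_conn E !inE.
apply/existsP/orP.
  by case=> l; rewrite andbA H => /andP [/orP [/eqP -> | /eqP ->] hP]; [left|right].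
by case=> hP; [exists l0 | exists ls]; rewrite andbA H eqxx ?orbT.
Qed.

Lemma single_ok L M x T s1 s2 (k : 'I_M) (l : item L) :
  conn_def x T k = [set l] -> @singleton_test L M x T s1 s2 k = Some l.
Proof.
move=> E; rewrite /singleton_test.
have -> : meas_weight x T s1 s2 k == 3 * L.
  rewrite weightE.
  rewrite (eq_bigr (fun _ => 3)); last first.
    move=> t _; rewrite (eq_bigr (fun _ => 1)); first by rewrite sum_nat_const card_ord.
    by move=> p _; rewrite !(ex1 _ E); case: bits.
  by rewrite sum_nat_const card_ord mulnC.
have -> : Ordinal (isT : 0 < 6) = inord (2 * 0) by apply: val_inj; rewrite /= inordK.
rewrite -(of_bits_bits l); apply: of_bits_ext => t.
by rewrite meas_even // (ex1 _ E).
Qed.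

Lemma empty_none L M x T s1 s2 (k : 'I_M) :
  0 < L -> conn_def x T k = set0 -> @singleton_test L M x T s1 s2 k = None.
Proof.
move=> L0 E; rewrite /singleton_test.
have -> : meas_weight x T s1 s2 k = 0.
  rewrite weightE big1 // => t _; rewrite big1 // => p _.
  have F P : [exists l, [&& T k l, x l & P l]] = false.
    by apply/existsP => -[l]; rewrite andbA -in_conn E inE.
  by rewrite !F.
by have -> : (0 == 3 * L) = false by rewrite eq_sym muln_eq0 /= eqn0Ngt L0.
Qed.

Lemma multi_none L M x T s1 s2 (k : 'I_M) :
  1 < #|conn_def x T k| -> @singleton_test L M x T s1 s2 k = None.
Proof.
case/card_gt1P => l [l' [hl hl' nll']]; rewrite /singleton_test.
rewrite !in_conn in hl hl'.
have [t0 ht0] : exists t0, bits l t0 != bits l' t0.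
  apply/existsP; rewrite -negb_forall; apply: contra nll' => /forallP H.
  by apply/eqP/bits_inj => t; apply/eqP.
have pair1 t p : 0 < [exists l, [&& T k l, x l & bits (hw s1 s2 p l) t]] +
      [exists l, [&& T k l, x l & ~~ bits (hw s1 s2 p l) t]].
  case E: (bits (hw s1 s2 p l) t).
    have -> : [exists l, [&& T k l, x l & bits (hw s1 s2 p l) t]] by apply/existsP; exists l; rewrite andbA hl E.
    by rewrite add1n.
  have -> : [exists l, [&& T k l, x l & ~~ bits (hw s1 s2 p l) t]] by apply/existsP; exists l; rewrite andbA hl E.
  by rewrite addn1.
have -> : meas_weight x T s1 s2 k == 3 * L = false.
  apply/negbTE; rewrite neq_ltn; apply/orP; right.
  rewrite weightE (bigD1 t0) //=.
  have -> : 3 * L = 3 + \sum_(t < L | t != t0) 3.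
    have := bigD1 t0 (F := fun _ : 'I_L => 3) (isT : true); rewrite /= => <-.
    by rewrite sum_nat_const card_ord mulnC.
  rewrite -addSn; apply: leq_add; last first.
    apply: leq_sum => t _; rewrite !big_ord_recl big_ord0.
    by apply: (@leq_trans (1 + (1 + (1 + 0)))) => //; rewrite !leq_add ?pair1.
  rewrite big_ord_recl !big_ord_recl big_ord0 addn0.
  have -> : [exists l, [&& T k l, x l & bits (hw s1 s2 0 l) t0]] +
      [exists l, [&& T k l, x l & ~~ bits (hw s1 s2 0 l) t0]] = 2.
    have E' : bits l' t0 = ~~ bits l t0 by move: ht0; case: (bits l t0); case: (bits l' t0).
    rewrite /=; case E: (bits l t0); rewrite E in E'.
      have -> : [exists l, [&& T k l, x l & bits l t0]] by apply/existsP; exists l; rewrite andbA hl E.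
      by have -> : [exists l, [&& T k l, x l & ~~ bits l t0]] by apply/existsP; exists l'; rewrite andbA hl' E'.
    have -> : [exists l, [&& T k l, x l & bits l t0]] by apply/existsP; exists l'; rewrite andbA hl' E'.
    by have -> : [exists l, [&& T k l, x l & ~~ bits l t0]] by apply/existsP; exists l; rewrite andbA hl E.
  by apply: (@leq_trans (2 + (1 + 1))) => //; rewrite !leq_add ?pair1.
by [].
Qed.

Lemma dbl_cE L M x T s1 s2 (k : 'I_M) (r : item L) w' t : w' < 3 ->
  @dbl_c L M x T s1 s2 k r w' t =
  if bits r t then ~~ [exists l, [&& T k l, x l & ~~ bits (hw s1 s2 w' l) t]]
  else [exists l, [&& T k l, x l & bits (hw s1 s2 w' l) t]].
Proof. by move=> h; rewrite /dbl_c meas_even // meas_odd. Qed.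

Lemma dbl_c_congr L M (x : item L -> bool) (T : 'I_M -> item L -> bool) s1 s2 s1' s2' (k : 'I_M) (r : item L) w' t : w' < 3 ->
  (forall l, T k l -> x l -> hw s1 s2 w' l = hw s1' s2' w' l) ->
  @dbl_c L M x T s1 s2 k r w' t = @dbl_c L M x T s1' s2' k r w' t.
Proof.
move=> h H; rewrite !dbl_cE //.
have E (b : item L -> bool) : [exists l, [&& T k l, x l & b (hw s1 s2 w' l)]] =
    [exists l, [&& T k l, x l & b (hw s1' s2' w' l)]].
  by apply: eq_existsb => l; case hT: (T k l); case hx: (x l) => //=; rewrite H.
have := E (fun y => bits y t); have := E (fun y => ~~ bits y t); rewrite /= => -> ->.
by [].
Qed.

Lemma dbl_ok L M x T s1 s2 (k : 'I_M) (l0 ls : item L) :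
  conn_def x T k = [set l0; ls] -> @doubleton_test L M x T s1 s2 k l0 = Some ls.
Proof.
move=> E.
have C w' t : w' < 3 -> dbl_c x T s1 s2 k (hw s1 s2 w' l0) w' t = bits (hw s1 s2 w' ls) t.
  by move=> h; rewrite dbl_cE // !(ex2 _ E); case: bits; case: bits.
rewrite /doubleton_test.
have -> : of_bits (dbl_c x T s1 s2 k l0 0) = Some ls.
  by rewrite -(of_bits_bits ls); apply: of_bits_ext => t; exact: (C 0 t).
have -> : of_bits (dbl_c x T s1 s2 k (s1 l0) 1) = Some (s1 ls).
  by rewrite -(of_bits_bits (s1 ls)); apply: of_bits_ext => t; exact: (C 1 t).
have -> : of_bits (dbl_c x T s1 s2 k (s2 l0) 2) = Some (s2 ls).
  by rewrite -(of_bits_bits (s2 ls)); apply: of_bits_ext => t; exact: (C 2 t).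
by rewrite !eqxx.
Qed.

Lemma count_fix (A B : finType) (a : A) (g : {ffun A -> B} -> option B) :
  (forall s s' : {ffun A -> B}, (forall y, y != a -> s y = s' y) -> g s = g s') ->
  #|[set s : {ffun A -> B} | Some (s a) == g s]| * #|B| <= #|{ffun A -> B}|.
Proof.
move=> Hg.
set S := [set s | _].
pose f (p : {ffun A -> B} * B) := [ffun y => if y == a then p.2 else p.1 y].
rewrite -cardsT -cardsX -(card_in_imset (f := f)); first exact: max_card.
move=> [s v] [s' v']; rewrite !inE /= => /andP[hs _] /andP[hs' _] e.
have ev : v = v' by have := congr1 (fun h : {ffun A -> B} => h a) e; rewrite !ffunE eqxx.
have eo y : y != a -> s y = s' y.
  by move=> hy; have := congr1 (fun h : {ffun A -> B} => h y) e; rewrite !ffunE (negbTE hy).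
congr (_, _) => //; apply/ffunP => y; case: (eqVneq y a) => [->|/eo //].
move/eqP: hs; move/eqP: hs'; rewrite (Hg s s' eo) => <-.
by case.
Qed.

Lemma rat_bound (b N n : nat) : 0 < N -> 0 < n -> b * (n * n) <= N * N ->
  ((b%:R / (N * N)%:R : rat) <= 1 / (n ^ 2)%:R)%R.
Proof.
move=> hN hn hb.
rewrite ler_pdivrMr ?ltr0n ?muln_gt0 ?hN // mul1r mulrC ler_pdivlMr ?ltr0n ?expn_gt0 ?hn //.
by rewrite -natrM ler_nat -mulnn.
Qed.

Theorem lemma1 (L K M : nat) (x : item L -> bool) (T : 'I_M -> item L -> bool)
    (k : 'I_M) :
  0 < L ->
  #|[set l | x l]| = K ->
  (* (i) *)
  ((forall s1 s2 : {ffun item L -> item L},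
      (singleton_test x T s1 s2 k != None) = (#|conn_def x T k| == 1)) /\
   (forall (s1 s2 : {ffun item L -> item L}) (l : item L),
      conn_def x T k = [set l] -> singleton_test x T s1 s2 k = Some l)) /\
  (* (ii) *)
  (forall (s1 s2 : {ffun item L -> item L}) (l0 lstar : item L),
      l0 != lstar -> conn_def x T k = [set l0; lstar] ->
      doubleton_test x T s1 s2 k l0 = Some lstar) /\
  (* (iii) *)
  (forall l0 : item L,
      x l0 -> T k l0 -> 2 <= #|conn_def x T k :\ l0| ->
      ((#|[set s | dbl_false_decl x T k l0 s]|%:R /
        #|{: {ffun item L -> item L} * {ffun item L -> item L}}|%:R : rat)
       <= 1 / ((2 ^ L) ^ 2)%:R)%R).
Proof.
move=> L0 _; split; [split|split].
- move=> s1 s2.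
  have [/eqP c0|c0] := boolP (#|conn_def x T k| == 0).
    by rewrite (empty_none _ _ L0 (cards0_eq c0)) c0.
  have [/cards1P [l E]|c1] := boolP (#|conn_def x T k| == 1).
    by rewrite (single_ok _ _ E).
  rewrite multi_none //.
  by move: c0 c1; case: #|_| => [|[|]].
- by move=> s1 s2 l E; apply: single_ok.
- by move=> s1 s2 l0 ls _ E; apply: dbl_ok.
move=> l0 hx0 hT0 _.
set D := conn_def x T k.
have l0D : l0 \in D by rewrite in_conn hT0 hx0.
pose s0 : {ffun item L -> item L} := [ffun=> l0].
have c1E s1 s2 : of_bits (dbl_c x T s1 s2 k l0 0) = of_bits (dbl_c x T s0 s0 k l0 0).
  by apply: of_bits_ext => t; apply: dbl_c_congr.
have c2E s1 s2 : of_bits (dbl_c x T s1 s2 k (s1 l0) 1) = of_bits (dbl_c x T s1 s0 k (s1 l0) 1).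
  by apply: of_bits_ext => t; apply: dbl_c_congr.
have c3E s1 s2 : of_bits (dbl_c x T s1 s2 k (s2 l0) 2) = of_bits (dbl_c x T s0 s2 k (s2 l0) 2).
  by apply: of_bits_ext => t; apply: dbl_c_congr.
set B := [set s | dbl_false_decl x T k l0 s].
have hN : 0 < #|{ffun item L -> item L}| by apply/card_gt0P; exists s0.
have hn : 0 < #|item L| by apply/card_gt0P; exists l0.
suff key : #|B| * (#|item L| * #|item L|) <= #|{ffun item L -> item L}| * #|{ffun item L -> item L}|.
  by have := rat_bound hN hn key; rewrite card_ord card_prod.
case Hc: (of_bits (dbl_c x T s0 s0 k l0 0)) => [l1|]; last first.
  have -> : B = set0.
    by apply/setP => s; rewrite !inE /dbl_false_decl /doubleton_test c1E Hc.
  by rewrite cards0.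
case: (boolP (l1 \in D)) => l1D.
  have -> : B = set0.
    apply/setP => s; rewrite !inE /dbl_false_decl /doubleton_test c1E Hc.
    case: of_bits => // ?; case: of_bits => // ?; case: ifP => // _.
    by rewrite l1D.
  by rewrite cards0.
pose S1 := [set s1 : {ffun item L -> item L} | Some (s1 l1) == of_bits (dbl_c x T s1 s0 k (s1 l0) 1)].
pose S2 := [set s2 : {ffun item L -> item L} | Some (s2 l1) == of_bits (dbl_c x T s0 s2 k (s2 l0) 2)].
have sub : B \subset setX S1 S2.
  apply/subsetP => -[s1 s2]; rewrite !inE /dbl_false_decl /doubleton_test /= c1E Hc c2E c3E.
  case: (of_bits (dbl_c x T s1 s0 k (s1 l0) 1)) => // l2.
  case: (of_bits (dbl_c x T s0 s2 k (s2 l0) 2)) => // l3.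
  by case: ifP => // /andP [/eqP -> /eqP ->] _; rewrite !eqxx.
have l01 : l0 != l1 by apply: contraNneq l1D => <-.
have offD (s s' : {ffun item L -> item L}) : (forall y, y != l1 -> s y = s' y) ->
    forall l, T k l -> x l -> s l = s' l.
  move=> H l hT hx; apply: H; apply: contraNneq l1D => <-.
  by rewrite in_conn hT hx.
have h1 : #|S1| * #|item L| <= #|{ffun item L -> item L}|.
  apply: count_fix => s s' H; rewrite (H l0 l01).
  by apply: of_bits_ext => t; apply: dbl_c_congr => // l hT hx; rewrite /= (offD _ _ H).
have h2 : #|S2| * #|item L| <= #|{ffun item L -> item L}|.
  apply: count_fix => s s' H; rewrite (H l0 l01).
  by apply: of_bits_ext => t; apply: dbl_c_congr => // l hT hx; rewrite /= (offD _ _ H).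
apply: (@leq_trans (#|S1| * #|S2| * (#|item L| * #|item L|))).
  by rewrite leq_mul2r -cardsX subset_leq_card ?orbT.
by rewrite mulnACA leq_mul.
Qed.
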